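(* Let $\mathcal{P}$ be a poset (not necessarily finite) of composition length at least $2$ whose Hasse diagram is a rooted tree with root $r$, and let $M$ be a $k\mathcal{P}$-module such that $\partial_0^*M\cong\partial_1^*M$ as $k\mathcal{G}^{\mathcal{P}}_1$-modules. Then: (1) for any $a\ne r$ and any $x,y>a$ in $\mathcal{P}$, $\ker M(a<x)=\ker M(a<y)$; (2) if $a<b$ and $c<d$ lie in the same line-component of $\mathcal{P}$ and $a,c\neq r$, then $\ker M(a<b)\cong\ker M(c<d)$; (3) if moreover $r$ has a unique successor $s$, then $\ker M(r<s)=\ker M(r<s')$ for every $s'>s$ that is not maximal in $\mathcal{P}$.
   Context: A poset is viewed as a category with a unique morphism $x\to y$ (written $x<y$ or $x\le y$) iff $x\le y$. A $k\mathcal{P}$-module is a functor to finite-dimensional $k$-vector spaces ($k$ a field). The composition length is the maximal length of a chain of covering relations $x_0\lessdot x_1\lessdot\cdots\lessdot x_m$. The Hasse diagram is a rooted tree with root $r$ means: $r$ is the unique minimal element and every $x\ne r$ has exactly one lower cover. A successor of $x$ is an upper cover of $x$. $\mathcal{G}^{\mathcal{P}}_1$ is the poset whose elements are the strict relations $a<b$ of $\mathcal{P}$ (written $[a<b]$), with $[a<b]\le[c<d]$ iff $[a<b]=[c<d]$ or $b\le c$; $\partial_0[a<b]=b$, $\partial_1[a<b]=a$, and $F^*M=M\circ F$. A set of strict relations is a line-component if it is the set of elements of a connected component of $\mathcal{G}^{\mathcal{P}}_1$. *)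

(* Defs.v *)
From HB Require Import structures.
From mathcomp Require Import all_boot all_order all_algebra.
From Stdlib Require Import Relations.Relation_Operators.
Set Implicit Arguments. Unset Strict Implicit. Unset Printing Implicit Defensive.
Import Order.POrderTheory GRing.Theory.
Local Open Scope order_scope.

(* A representation of a "category given by a relation" R on S (a poset viewed
   as a category, with a unique morphism x -> y iff R x y) in finite-dimensional
   k-vector spaces: the space at x is k^(rdim x) (row vectors) and the map for
   x -> y is the matrix rmor h, acting on row vectors by v |-> v *m rmor h. *)
Record rep (k : fieldType) (S : Type) (R : S -> S -> Prop) := Rep {
  rdim : S -> nat;
  rmor : forall x y, R x y -> 'M[k]_(rdim x, rdim y) }.
Arguments rmor {k S R} r {x y} h.
Arguments rdim {k S R} r x.

Definition is_rep (k : fieldType) S (R : S -> S -> Prop) (M : rep k R) : Prop :=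
  (forall x (h : R x x), rmor M h = (1%:M)%R) /\
  (forall x y z (hxy : R x y) (hyz : R y z) (hxz : R x z),
      rmor M hxz = (rmor M hxy *m rmor M hyz)%R).

Definition pullback (k : fieldType) S T (RS : S -> S -> Prop) (RT : T -> T -> Prop)
  (F : S -> T) (Fm : forall u v, RS u v -> RT (F u) (F v)) (M : rep k RT) : rep k RS :=
  @Rep k S RS (fun u => rdim M (F u)) (fun u v h => rmor M (Fm u v h)).

Definition rep_iso (k : fieldType) S (R : S -> S -> Prop) (N1 N2 : rep k R) : Prop :=
  exists (phi : forall u, 'M[k]_(rdim N1 u, rdim N2 u))
         (psi : forall u, 'M[k]_(rdim N2 u, rdim N1 u)),
    (forall u, (phi u *m psi u = (1%:M)%R)%R /\ (psi u *m phi u = (1%:M)%R)%R) /\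
    (forall u v (h : R u v), (rmor N1 h *m phi v = phi u *m rmor N2 h)%R).

Section Poset.
Variables (disp : Order.disp_t) (T : porderType disp).

Definition Pmod (k : fieldType) := rep k (fun x y : T => x <= y).

Definition kerM (k : fieldType) (M : Pmod k) (a b : T) (h : a < b) :=
  kermx (rmor M (ltW h)).

Definition covers (x y : T) : Prop := x < y /\ ~ (exists z, x < z /\ z < y).
Definition comp_length_ge2 : Prop :=
  exists x0 x1 x2 : T, covers x0 x1 /\ covers x1 x2.

Definition minimal (x : T) : Prop := forall y, ~ (y < x).
Definition hasse_rooted_tree (r : T) : Prop :=
  minimal r /\ (forall x, minimal x -> x = r) /\
  (forall x, x <> r -> exists y, covers y x /\ forall y', covers y' x -> y' = y).

Definition G1 := {p : T * T | p.1 < p.2}.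
Definition G1rel (a b : T) (h : a < b) : G1 := exist (fun p : T * T => p.1 < p.2) (a, b) h.
Definition G1le (g h : G1) : Prop := g = h \/ (sval g).2 <= (sval h).1.
Definition d0 (g : G1) : T := (sval g).2.
Definition d1 (g : G1) : T := (sval g).1.

Lemma d0_mono g h : G1le g h -> d0 g <= d0 h.
Proof.
case=> [->|H]; first exact: lexx.
exact: le_trans H (ltW (svalP h)).
Qed.

Lemma d1_mono g h : G1le g h -> d1 g <= d1 h.
Proof.
case=> [->|H]; first exact: lexx.
exact: le_trans (ltW (svalP g)) H.
Qed.

Definition same_line_component (g h : G1) : Prop :=
  clos_refl_trans G1 (fun u v => G1le u v \/ G1le v u) g h.

Definition successor (x y : T) : Prop := covers x y.
Definition maximal (x : T) : Prop := forall y, ~ (x < y).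

End Poset.

(* Main.v *)
Require Import Defs.
From HB Require Import structures.
From mathcomp Require Import all_boot all_order all_algebra.
From Stdlib Require Import Classical Relations.Relation_Operators.
Import Order.POrderTheory GRing.Theory.
Local Open Scope ring_scope.

Lemma ker_mulr (k : fieldType) m n p (A : 'M[k]_(m,n)) (B : 'M_(n,p)) (C : 'M_(p,n)) :
  B *m C = 1%:M -> (kermx (A *m B) == kermx A)%MS.
Proof.
move=> BC; apply/andP; split; apply/sub_kermxP.
  have -> : kermx (A *m B) *m A = kermx (A *m B) *m (A *m B) *m C
    by rewrite -!mulmxA BC mulmx1.
  by rewrite mulmx_ker mul0mx.
by rewrite mulmxA mulmx_ker mul0mx.
Qed.

Lemma ker_mull (k : fieldType) m n p q (P : 'M[k]_(m,n)) (Q : 'M_(n,m)) (A : 'M_(n,p)) (B : 'M_(n,q)) :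
  Q *m P = 1%:M -> (kermx (P *m A) == kermx (P *m B))%MS -> (kermx A == kermx B)%MS.
Proof.
move=> QP.
have H : forall p1 p2 (X : 'M_(n,p1)) (Y : 'M_(n,p2)), (kermx (P *m X) <= kermx (P *m Y))%MS -> (kermx X <= kermx Y)%MS.
  move=> p1 p2 X Y sXY; apply/sub_kermxP.
  have h1 : (kermx X *m Q <= kermx (P *m X))%MS.
    by apply/sub_kermxP; rewrite !mulmxA -(mulmxA _ Q P) QP mulmx1 mulmx_ker.
  have := submx_trans h1 sXY => /sub_kermxP.
  by rewrite !mulmxA -(mulmxA _ Q P) QP mulmx1.
by move=> /andP [h1 h2]; apply/andP; split; apply: H.
Qed.

Lemma rank_mulr (k : fieldType) m n p (A : 'M[k]_(m,n)) (B : 'M_(n,p)) (C : 'M_(p,n)) :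
  B *m C = 1%:M -> \rank (A *m B) = \rank A.
Proof.
move=> BC; apply/eqP; rewrite eqn_leq mxrankM_maxl /=.
by rewrite -{1}[A]mulmx1 -BC mulmxA mxrankM_maxl.
Qed.

Lemma rank_mull (k : fieldType) m n p (P : 'M[k]_(m,n)) (Q : 'M_(n,m)) (A : 'M_(n,p)) :
  Q *m P = 1%:M -> \rank (P *m A) = \rank A.
Proof.
move=> QP; apply/eqP; rewrite eqn_leq mxrankM_maxr /=.
by rewrite -{1}[A]mul1mx -QP -mulmxA mxrankM_maxr.
Qed.

Lemma dim_eq (k : fieldType) m n (A : 'M[k]_(m,n)) (B : 'M_(n,m)) :
  A *m B = 1%:M -> B *m A = 1%:M -> m = n.
Proof.
move=> AB BA; apply/eqP; rewrite eqn_leq.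
have h1 := mxrankM_maxl A B; rewrite AB mxrank1 in h1.
have h2 := mxrankM_maxl B A; rewrite BA mxrank1 in h2.
by rewrite (leq_trans h1 (rank_leq_col _)) (leq_trans h2 (rank_leq_col _)).
Qed.

Local Close Scope ring_scope.

Theorem lemma4p5 (k : fieldType) (disp : Order.disp_t) (T : porderType disp)
  (r : T) (M : @Pmod _ T k) :
  comp_length_ge2 T ->
  hasse_rooted_tree r ->
  is_rep M ->
  rep_iso (pullback (@d0_mono disp T) M) (pullback (@d1_mono disp T) M) ->
  [/\ (forall (a x y : T) (hx : (a < x)%O) (hy : (a < y)%O),
          a <> r -> (kerM M hx == kerM M hy)%MS),
      (forall (a b c d : T) (hab : (a < b)%O) (hcd : (c < d)%O),
          same_line_component (G1rel hab) (G1rel hcd) -> a <> r -> c <> r ->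
          \rank (kerM M hab) = \rank (kerM M hcd))
    & (forall s : T, successor r s -> (forall t, successor r t -> t = s) ->
        forall (hrs : (r < s)%O) (s' : T) (hss' : (s < s')%O), ~ maximal s' ->
          (kerM M hrs == kerM M (lt_trans hrs hss'))%MS)].
Proof.
move=> _ [_ [_ Htree]] _ [phi [psi [inv nat]]].
have rmorP : forall x y (h1 h2 : (x <= y)%O), rmor M h1 = rmor M h2.
  by move=> x y h1 h2; rewrite (bool_irrelevance h1 h2).
have natE : forall a b c d (hab : (a < b)%O) (hcd : (c < d)%O) (hbc : (b <= c)%O),
    (rmor M (le_trans hbc (ltW hcd)) *m phi (G1rel hcd) =
     phi (G1rel hab) *m rmor M (le_trans (ltW hab) hbc))%R.
  move=> a b c d hab hcd hbc.
  have := nat (G1rel hab) (G1rel hcd) (or_intror hbc).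
  rewrite /pullback /=.
  by rewrite (rmorP _ _ _ (le_trans hbc (ltW hcd))) (rmorP _ _ _ (le_trans (ltW hab) hbc)).
split.
- move=> a x y hx hy ar.
  have [p [[hpa _] _]] := Htree a ar.
  have K : forall x (hx : (a < x)%O), (kermx (rmor M (ltW hx)) :=:
      kermx (phi (G1rel hpa) *m rmor M (le_trans (ltW hpa) (lexx a))))%MS.
    move=> z hz; apply/eqmxP.
    rewrite (rmorP _ _ (ltW hz) (le_trans (lexx a) (ltW hz))) -(natE p a a z hpa hz (lexx a)).
    apply/eqmxP/eqmx_sym/eqmxP.
    apply: (@ker_mulr _ _ _ _ (rmor M (le_trans (lexx a) (ltW hz))) (phi (G1rel hz)) (psi (G1rel hz))).
    exact (proj1 (inv (G1rel hz))).
  apply/eqmxP; exact: eqmx_trans (K x hx) (eqmx_sym (K y hy)).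
- have shared : forall a b d (hab : (a < b)%O) (hbd : (b < d)%O),
      \rank (kermx (rmor M (ltW hab))) = \rank (kermx (rmor M (ltW hbd))).
    move=> a b d hab hbd; rewrite !mxrank_ker.
    have E := natE a b b d hab hbd (lexx b).
    have Hd : rdim M b = rdim M a :=
      @dim_eq _ _ _ _ _ (proj1 (inv (G1rel hab))) (proj2 (inv (G1rel hab))).
    have Hr : \rank (rmor M (ltW hbd)) = \rank (rmor M (ltW hab)).
      rewrite (rmorP _ _ (ltW hbd) (le_trans (lexx b) (ltW hbd))).
      rewrite -(@rank_mulr _ _ _ _ _ (phi (G1rel hbd)) (psi (G1rel hbd)) (proj1 (inv (G1rel hbd)))).
      rewrite E (@rank_mull _ _ _ _ (phi (G1rel hab)) (psi (G1rel hab)) _ (proj2 (inv (G1rel hab)))).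
      by rewrite (rmorP _ _ (ltW hab) (le_trans (ltW hab) (lexx b))).
    by rewrite Hr; congr (_ - _).
  pose f (g : G1 T) := \rank (kermx (rmor M (ltW (proj2_sig g)))).
  have step : forall u v, G1le u v -> f u = f v.
    move=> u v [->|] //.
    case: u => [[a b] hab]; case: v => [[c d] hcd] /= hbc.
    move: hbc; rewrite le_eqVlt => /orP [/eqP E | hbc'].
      subst c; rewrite /f /=; exact: (shared a b d hab hcd).
    rewrite /f /=; exact: (etrans (shared a b c hab hbc') (shared b c d hbc' hcd)).
  move=> a b c d hab hcd Hl _ _.
  change (f (G1rel hab) = f (G1rel hcd)).
  elim: Hl => [u v [/step|/step ->] | u | u v w _ IH1 _ IH2] //.
  by rewrite IH1 IH2.
- move=> s _ _ hrs s' hss' nmax.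
  have [t hst'] : exists t, (s' < t)%O.
    apply: NNPP => H; apply: nmax => y hy; apply: H; by exists y.
  have hst := lt_trans hss' hst'.
  have K : forall x (hsx : (s <= x)%O) (hxt : (x < t)%O),
    (kermx (phi (G1rel hrs) *m rmor M (le_trans (ltW hrs) hsx)) :=: kermx (rmor M (ltW hst)))%MS.
    move=> x hsx hxt; apply/eqmxP.
    rewrite -(natE r s x t hrs hxt hsx) (rmorP _ _ (le_trans hsx (ltW hxt)) (ltW hst)).
    apply: (@ker_mulr _ _ _ _ (rmor M (ltW hst)) (phi (G1rel hxt)) (psi (G1rel hxt))).
    exact (proj1 (inv (G1rel hxt))).
  have E := eqmx_trans (K s (lexx s) hst) (eqmx_sym (K s' (ltW hss') hst')).
  have := @ker_mull _ _ _ _ _ (phi (G1rel hrs)) (psi (G1rel hrs)) (rmor M (le_trans (ltW hrs) (lexx s))) (rmor M (le_trans (ltW hrs) (ltW hss'))) (proj2 (inv (G1rel hrs))) (introT eqmxP E).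
  rewrite /kerM (rmorP _ _ (ltW hrs) (le_trans (ltW hrs) (lexx s))).
  by rewrite (rmorP _ _ (ltW (lt_trans hrs hss')) (le_trans (ltW hrs) (ltW hss'))).
Qed.
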